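(* Let $Y\subset\mathbb{R}^n$ be open, and let $\omega\colon Y\to\mathbb{R}^n$, $f\colon Y\to\mathbb{R}^n$, $F\colon Y\to\mathbb{R}$, $H\colon Y\to\mathbb{R}^{n\times m}$, $g\colon Y\to\mathbb{R}^m$, $g^{\mathrm{num}}\colon Y\times Y\to\mathbb{R}^m$, $f^{\mathrm{num}}\colon Y\times Y\to\mathbb{R}^n$ be arbitrary with $f^{\mathrm{num}}(u,u)=f(u)$, $g^{\mathrm{num}}(u,u)=g(u)$. Then the following are equivalent: (A) there exists $F^{\mathrm{num}}\colon Y\times Y\to\mathbb{R}$ with $F^{\mathrm{num}}(u,u)=F(u)$ such that for all $u_-,u_0,u_+\in Y$, $$\omega(u_0)\cdot\Big(f^{\mathrm{num}}(u_0,u_+)-f^{\mathrm{num}}(u_-,u_0)+H(u_0)g^{\mathrm{num}}(u_0,u_+)-H(u_0)g^{\mathrm{num}}(u_-,u_0)\Big)\ \ge\ F^{\mathrm{num}}(u_0,u_+)-F^{\mathrm{num}}(u_-,u_0);$$ (B) for all $u_-,u_+\in Y$, $$[\![\omega]\!]\cdot f^{\mathrm{num}}(u_-,u_+)+[\![\omega\cdot H]\!]\,g^{\mathrm{num}}(u_-,u_+)-[\![\omega\cdot Hg]\!]\ \le\ [\![\omega\cdot f-F]\!].$$ Moreover, there exists a consistent $F^{\mathrm{num}}$ with equality in (A) for all triples iff (B) holds with equality for all pairs, and then $$F^{\mathrm{num}}=\{\{F\}\}+\{\{\omega\}\}\cdot f^{\mathrm{num}}-\{\{\omega\cdot f\}\}-\{\{\omega\cdot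 Hg\}\}+\{\{\omega\cdot H\}\}\,g^{\mathrm{num}}.$$
   Context: For a function $a$ on $Y$ and states $u_\pm$: $\{\{a\}\}=\tfrac12(a(u_-)+a(u_+))$, $[\![a]\!]=a(u_+)-a(u_-)$; $\omega\cdot H=\omega^TH\in\mathbb{R}^{1\times m}$ and $\omega\cdot Hg=\omega^THg\in\mathbb{R}$; numerical fluxes are evaluated at $(u_-,u_+)$. *)

(* Defs.v *)
From HB Require Import structures.
From mathcomp Require Import all_boot all_order all_algebra.
From mathcomp Require Import all_classical all_reals all_analysis.
Set Implicit Arguments. Unset Strict Implicit. Unset Printing Implicit Defensive.
Import Order.TTheory GRing.Theory Num.Theory.
Import numFieldNormedType.Exports.
Local Open Scope ring_scope.

Definition dotv (R : realType) (n : nat) (a b : 'cV[R]_n) : R := (a^T *m b) 0 0.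

Definition dotH (R : realType) (n m : nat) (w : 'cV[R]_n) (H : 'M[R]_(n, m))
  : 'rV[R]_m := w^T *m H.

Definition rvapp (R : realType) (m : nat) (r : 'rV[R]_m) (v : 'cV[R]_m) : R :=
  (r *m v) 0 0.

Definition jump (R : realType) (V : lmodType R) (Y : Type) (a : Y -> V) (um up : Y) : V :=
  a up - a um.
Definition avg (R : realType) (V : lmodType R) (Y : Type) (a : Y -> V) (um up : Y) : V :=
  (2 : R)^-1 *: (a um + a up).

(* Main.v *)
Require Import Defs.
From HB Require Import structures.
From mathcomp Require Import all_boot all_order all_algebra.
From mathcomp Require Import all_classical all_reals all_analysis.
Import Order.TTheory GRing.Theory Num.Theory.
Import numFieldNormedType.Exports.
From mathcomp Require Import lra.
Local Open Scope ring_scope.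
Local Open Scope classical_set_scope.


Lemma dotvDl (R : realType) (n : nat) (a b c : 'cV[R]_n) : dotv (a + b) c = dotv a c + dotv b c.
Proof. by rewrite /dotv linearD /= mulmxDl mxE. Qed.
Lemma dotvBl (R : realType) (n : nat) (a b c : 'cV[R]_n) : dotv (a - b) c = dotv a c - dotv b c.
Proof. rewrite /dotv !mxE -sumrB; apply: eq_bigr => i _; rewrite !mxE mulrBl. done. Qed.
Lemma dotvZl (R : realType) (n : nat) (k : R) (a c : 'cV[R]_n) : dotv (k *: a) c = k * dotv a c.
Proof. rewrite /dotv !mxE mulr_sumr; apply: eq_bigr => i _; rewrite !mxE mulrA. done. Qed.
Lemma dotvDr (R : realType) (n : nat) (a b c : 'cV[R]_n) : dotv c (a + b) = dotv c a + dotv c b.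
Proof. by rewrite /dotv mulmxDr mxE. Qed.
Lemma dotvBr (R : realType) (n : nat) (a b c : 'cV[R]_n) : dotv c (a - b) = dotv c a - dotv c b.
Proof. rewrite /dotv !mxE -sumrB; apply: eq_bigr => i _; rewrite !mxE mulrBr. done. Qed.
Lemma dotvNr (R : realType) (n : nat) (a c : 'cV[R]_n) : dotv c (- a) = - dotv c a.
Proof. rewrite /dotv !mxE -sumrN; apply: eq_bigr => i _; rewrite !mxE mulrN. done. Qed.
Lemma dotv_mul (R : realType) (n m : nat) (c : 'cV[R]_n) (M : 'M[R]_(n,m)) (v : 'cV[R]_m) : dotv c (M *m v) = rvapp (dotH c M) v.
Proof. rewrite /dotv. rewrite /rvapp. rewrite /dotH. by rewrite mulmxA. Qed.
Lemma rvappDl (R : realType) (m : nat) (r s : 'rV[R]_m) (v : 'cV[R]_m) : rvapp (r + s) v = rvapp r v + rvapp s v.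
Proof. by rewrite /rvapp mulmxDl mxE. Qed.
Lemma rvappBl (R : realType) (m : nat) (r s : 'rV[R]_m) (v : 'cV[R]_m) : rvapp (r - s) v = rvapp r v - rvapp s v.
Proof. rewrite /rvapp !mxE -sumrB; apply: eq_bigr => i _; rewrite !mxE mulrBl. done. Qed.
Lemma rvappZl (R : realType) (m : nat) (k : R) (r : 'rV[R]_m) (v : 'cV[R]_m) : rvapp (k *: r) v = k * rvapp r v.
Proof. rewrite /rvapp !mxE mulr_sumr; apply: eq_bigr => i _; rewrite !mxE mulrA. done. Qed.

Theorem mainTheorem5 (R : realType) (n m : nat) (Y : set 'cV[R]_n)
  (omega f : 'cV[R]_n -> 'cV[R]_n) (F : 'cV[R]_n -> R)
  (H : 'cV[R]_n -> 'M[R]_(n, m)) (g : 'cV[R]_n -> 'cV[R]_m)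
  (gnum : 'cV[R]_n -> 'cV[R]_n -> 'cV[R]_m)
  (fnum : 'cV[R]_n -> 'cV[R]_n -> 'cV[R]_n) :
  open Y ->
  (forall u, Y u -> fnum u u = f u) ->
  (forall u, Y u -> gnum u u = g u) ->
  let condA (Fnum : 'cV[R]_n -> 'cV[R]_n -> R) (eq : bool) :=
    (forall u, Y u -> Fnum u u = F u) /\
    (forall um u0 up, Y um -> Y u0 -> Y up ->
       let lhs := dotv (omega u0)
         (fnum u0 up - fnum um u0 + H u0 *m gnum u0 up - H u0 *m gnum um u0) in
       let rhs := Fnum u0 up - Fnum um u0 in
       if eq then lhs = rhs else rhs <= lhs) in
  let lhsB (um up : 'cV[R]_n) :=
    dotv (jump omega um up) (fnum um up)
    + rvapp (jump (fun u => dotH (omega u) (H u)) um up) (gnum um up)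
    - jump (fun u => rvapp (dotH (omega u) (H u)) (g u)) um up in
  let rhsB (um up : 'cV[R]_n) :=
    jump (fun u => dotv (omega u) (f u) - F u) um up in
  ((exists Fnum, condA Fnum false) <->
     (forall um up, Y um -> Y up -> lhsB um up <= rhsB um up)) /\
  ((exists Fnum, condA Fnum true) <->
     (forall um up, Y um -> Y up -> lhsB um up = rhsB um up)) /\
  (forall Fnum, condA Fnum true ->
     forall um up, Y um -> Y up ->
       Fnum um up =
         avg F um up
         + dotv (avg omega um up) (fnum um up)
         - avg (fun u => dotv (omega u) (f u)) um up
         - avg (fun u => rvapp (dotH (omega u) (H u)) (g u)) um up
         + rvapp (avg (fun u => dotH (omega u) (H u)) um up) (gnum um up)).

Proof.
move=> Yo Hf Hg; cbv beta zeta iota.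
pose a u := dotv (omega u) (f u).
pose b u := rvapp (dotH (omega u) (H u)) (g u).
pose phi x y := dotv (omega x) (fnum x y) + rvapp (dotH (omega x) (H x)) (gnum x y).
pose psi x y := dotv (omega y) (fnum x y) + rvapp (dotH (omega y) (H y)) (gnum x y).
have EA : forall um u0 up, dotv (omega u0)
   (fnum u0 up - fnum um u0 + H u0 *m gnum u0 up - H u0 *m gnum um u0)
   = phi u0 up - psi um u0.
  by move=> um u0 up; rewrite !dotvDr !dotvNr !dotv_mul /phi /psi; lra.
have EB : forall um up,
    dotv (jump omega um up) (fnum um up)
    + rvapp (jump (fun u => dotH (omega u) (H u)) um up) (gnum um up)
    - jump (fun u => rvapp (dotH (omega u) (H u)) (g u)) um up
  = psi um up - phi um up - (b up - b um).
  by move=> um up; rewrite /jump dotvBl rvappBl /phi /psi /b; lra.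
have EC : forall um up, jump (fun u => dotv (omega u) (f u) - F u) um up
   = a up - F up - (a um - F um).
  by move=> um up; rewrite /jump /a.
have Ed1 : forall u, Y u -> phi u u = a u + b u.
  by move=> u Yu; rewrite /phi /a /b Hf // Hg.
have Ed2 : forall u, Y u -> psi u u = a u + b u.
  by move=> u Yu; rewrite /psi /a /b Hf // Hg.
have Eavg : forall um up,
  avg F um up
         + dotv (avg omega um up) (fnum um up)
         - avg (fun u => dotv (omega u) (f u)) um up
         - avg (fun u => rvapp (dotH (omega u) (H u)) (g u)) um up
         + rvapp (avg (fun u => dotH (omega u) (H u)) um up) (gnum um up)
  = (F um + F up) / 2 + (phi um up + psi um up) / 2 - (a um + a up) / 2
     - (b um + b up) / 2.
  move=> um up; rewrite /avg dotvZl dotvDl rvappZl rvappDl /phi /psi /a /b.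
  have sc : forall x y : R, x *: y = x * y := fun _ _ => erefl.
  rewrite !sc; lra.
clearbody a b phi psi.
split; [split|split; [split|]].
- case=> Fn [Hd Hin] um up Yum Yup.
  have h1 := Hin um up up Yum Yup Yup; have h2 := Hin um um up Yum Yum Yup.
  move: h1 h2; rewrite !EA EB EC Hd // Hd // Ed1 // Ed2 //; lra.
- move=> HB; exists (fun x y => phi x y - a x - b x + F x); split.
    by move=> u Yu; cbv beta; rewrite Ed1 //; lra.
  move=> um u0 up Yum Yu0 Yup; cbv beta; rewrite EA.
  have := HB um u0 Yum Yu0; rewrite EB EC; lra.
- case=> Fn [Hd Hin] um up Yum Yup.
  have h1 := Hin um up up Yum Yup Yup; have h2 := Hin um um up Yum Yum Yup.
  move: h1 h2; rewrite !EA EB EC Hd // Hd // Ed1 // Ed2 //; lra.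
- move=> HB; exists (fun x y => phi x y - a x - b x + F x); split.
    by move=> u Yu; cbv beta; rewrite Ed1 //; lra.
  move=> um u0 up Yum Yu0 Yup; cbv beta; rewrite EA.
  have := HB um u0 Yum Yu0; rewrite EB EC; lra.
- move=> Fn [Hd Hin] um up Yum Yup.
  have h1 := Hin um up up Yum Yup Yup; have h2 := Hin um um up Yum Yum Yup.
  move: h1 h2; rewrite !EA Eavg Hd // Hd // Ed1 // Ed2 //; lra.
Qed.
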